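(* Let $K\in\mathbb{N}$, $\gamma>0$, and let $h\colon\mathbb{R}^K\to\mathbb{R}\cup\{+\infty\}$, $h(\alpha)=\|\alpha\|_0+\iota_{\Delta_K}(\alpha)$. Let $\alpha\in\Delta_K$ with $\alpha_1\le\cdots\le\alpha_K$. Then: (i) An element $\hat\alpha\in\operatorname{prox}_{\gamma h}(\alpha)$ is given by $\hat\alpha_J=0$ and $\hat\alpha_{J^c}=\alpha_{J^c}+\frac{1}{|J^c|}\sum_{k\in J}\alpha_k$, where $J=[K_0]=\{1,\dots,K_0\}$, $J^c=[K]\setminus J$, and $$K_0\in\operatorname*{argmin}_{n\in\{0,\dots,K-1\}} g(n),\qquad g(n)=\frac{1}{2\gamma}\frac{\big(\sum_{k=1}^n\alpha_k\big)^2}{K-n}+\frac{1}{2\gamma}\sum_{k=1}^n\alpha_k^2-n.$$ (ii) If $\alpha_i=0$ for some $i\in\{1,\dots,K\}$, then $\hat\alpha_i=0$ for every $\hat\alpha\in\operatorname{prox}_{\gamma h}(\alpha)$.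
   Context: $\Delta_K=\{\alpha\in\mathbb{R}^K_{\ge0}:\sum_{k=1}^K\alpha_k=1\}$ is the probability simplex; $\|\alpha\|_0=|\{k:\alpha_k>0\}|$; $\iota_{\Delta_K}(\alpha)=0$ if $\alpha\in\Delta_K$ and $+\infty$ otherwise. For a proper lower semicontinuous $g\colon\mathbb{R}^K\to\mathbb{R}\cup\{+\infty\}$ and $\gamma>0$, the (possibly set-valued) proximal operator is $\operatorname{prox}_{\gamma g}(x)=\operatorname*{argmin}_{y\in\mathbb{R}^K}\{\frac{1}{2\gamma}\|x-y\|^2+g(y)\}$, with $\|\cdot\|$ the Euclidean norm. For $J\subseteq[K]$, $\alpha_J=(\alpha_k)_{k\in J}$; $[0]=\emptyset$. *)

(* Defs.v *)
From HB Require Import structures.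
From mathcomp Require Import all_boot all_order all_algebra.
From mathcomp Require Import boolp reals constructive_ereal.
Set Implicit Arguments. Unset Strict Implicit. Unset Printing Implicit Defensive.
Import Order.TTheory GRing.Theory Num.Theory.
Local Open Scope ring_scope.

Section Defs.
Variable R : realType.

Definition in_simplex (K : nat) (a : 'I_K -> R) : Prop :=
  (forall k, 0 <= a k) /\ \sum_(k < K) a k = 1.

Definition l0 (K : nat) (a : 'I_K -> R) : nat := #|[set k | 0 < a k]|.

Definition h_l0_simplex (K : nat) (a : 'I_K -> R) : \bar R :=
  if `[< in_simplex a >] then ((l0 a)%:R)%:E else +oo%E.

Definition sqdist (K : nat) (x y : 'I_K -> R) : R :=
  \sum_(k < K) (x k - y k) ^+ 2.

Definition in_prox (K : nat) (gamma : R) (g : ('I_K -> R) -> \bar R)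
    (x y : 'I_K -> R) : Prop :=
  forall z : 'I_K -> R,
    ((sqdist x y / (2 * gamma))%:E + g y <= (sqdist x z / (2 * gamma))%:E + g z)%E.

(* g(n) from the statement (alpha_1..alpha_n are the indices k < n, 0-based) *)
Definition gfun (K : nat) (gamma : R) (a : 'I_K -> R) (n : nat) : R :=
  (\sum_(k < K | (k < n)%N) a k) ^+ 2 / (K - n)%:R / (2 * gamma)
  + (\sum_(k < K | (k < n)%N) a k ^+ 2) / (2 * gamma) - n%:R.

Definition prox_candidate (K : nat) (a : 'I_K -> R) (K0 : nat) : 'I_K -> R :=
  fun k => if (k < K0)%N then 0
           else a k + (\sum_(j < K | (j < K0)%N) a j) / (K - K0)%:R.

End Defs.

(* Main.v *)
Require Import Defs.
From HB Require Import structures.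
From mathcomp Require Import all_boot all_order all_algebra.
From mathcomp Require Import boolp reals constructive_ereal.
From mathcomp Require Import ring lra zify.
Import Order.TTheory GRing.Theory Num.Theory.
Local Open Scope ring_scope.


Section Helpers.
Variable R : realType.

Lemma card_lt (K n : nat) : (n <= K)%N -> #|[set k : 'I_K | (k < n)%N]| = n.
Proof.
move=> nK; rewrite -sum1_card.
rewrite (eq_bigl (fun k : 'I_K => true && (k < n)%N)); last by move=> k; rewrite inE.
by rewrite -(big_ord_widen_cond K (fun _ => true) (fun _ => 1%N) nK) sum1_card card_ord.
Qed.

Lemma sum_lt_set (K n : nat) (f : 'I_K -> R) :
  \sum_(k < K | (k < n)%N) f k = \sum_(k in [set k : 'I_K | (k < n)%N]) f k.
Proof. by apply: eq_bigl => k; rewrite inE. Qed.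

Lemma rearr (K n : nat) (f : 'I_K -> R) (A : {set 'I_K}) :
  (forall k, 0 <= f k) -> (forall i j : 'I_K, (i <= j)%N -> f i <= f j) ->
  #|A| = n -> \sum_(k < K | (k < n)%N) f k <= \sum_(k in A) f k.
Proof.
move=> f0 fm cA; case: n cA => [|n] cA; rewrite sum_lt_set.
  have -> : A = set0 by apply/eqP; rewrite -cards_eq0 cA.
  by rewrite big_set0.
set B := [set k : 'I_K | (k < n.+1)%N].
have nK : (n.+1 <= K)%N by move: (max_card A); rewrite cA card_ord.
have cB : #|B| = n.+1 by rewrite card_lt.
rewrite (big_setID A) [X in _ <= X](big_setID B) /= setIC lerD2l.
have cD : #|B :\: A| = #|A :\: B| by rewrite !cardsD cA cB setIC.
pose t := f (Ordinal (nK : (n < K)%N)).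
apply: (@le_trans _ _ (t *+ #|A :\: B|)).
  rewrite -cD -sumr_const; apply: ler_sum => k; rewrite !inE => /andP[_ kn].
  by apply: fm => /=; rewrite -ltnS.
rewrite -sumr_const; apply: ler_sum => k; rewrite !inE => /andP[kn _].
by apply: fm; move: kn; rewrite -leqNgt => /ltnW.
Qed.

Lemma face_lb (K : nat) (a z : 'I_K -> R) (S : {set 'I_K}) :
  (forall k, k \notin S -> z k = 0) -> \sum_k z k = \sum_k a k -> (0 < #|S|)%N ->
  \sum_(k in ~: S) a k ^+ 2 + (\sum_(k in ~: S) a k) ^+ 2 / #|S|%:R <= sqdist a z.
Proof.
move=> zS sz Spos.
have split F : \sum_k F k = \sum_(k in S) F k + \sum_(k in ~: S) F k :> R.
  rewrite (bigID (fun k => k \in S)) /=; congr (_ + _); apply: eq_bigl => k.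
  by rewrite in_setC.
set T := \sum_(k in ~: S) a k.
set m : R := #|S|%:R.
have mpos : 0 < m by rewrite ltr0n.
pose d k := z k - a k.
have sd : \sum_(k in S) d k = T.
  rewrite /d sumrB; move: sz; rewrite !split.
  rewrite [X in _ + X = _](big1 _ _ (fun k => _)) ?addr0; last first.
    by move=> k; rewrite in_setC => /zS.
  by move=> ->; rewrite addrC addKr.
have E c : \sum_(k in S) (d k - c) ^+ 2 =
    \sum_(k in S) d k ^+ 2 - 2 * c * \sum_(k in S) d k + c ^+ 2 *+ #|S|.
  rewrite mulr_sumr -sumr_const -sumrB -big_split /=; apply: eq_bigr => k _.
  ring.
have H0 : 0 <= \sum_(k in S) (d k - T / m) ^+ 2 by apply: sumr_ge0 => k _; exact: sqr_ge0.
rewrite E sd -mulr_natr -/m in H0.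
have ET : T ^+ 2 / m = 2 * (T / m) * T - (T / m) ^+ 2 * m.
  by field; rewrite gt_eqF.
have Hd : \sum_(k in S) (a k - z k) ^+ 2 = \sum_(k in S) d k ^+ 2.
  by apply: eq_bigr => k _; rewrite /d -sqrrN opprB.
have Hc : \sum_(k in ~: S) (a k - z k) ^+ 2 = \sum_(k in ~: S) a k ^+ 2.
  by apply: eq_bigr => k; rewrite in_setC => /zS ->; rewrite subr0.
rewrite /sqdist split Hd Hc ET; lra.
Qed.

Lemma card_ge (K n : nat) : (n <= K)%N -> #|~: [set k : 'I_K | (k < n)%N]| = (K - n)%N.
Proof.
move=> nK; have E := cardsC [set k : 'I_K | (k < n)%N].
rewrite card_lt // card_ord in E.
by apply/eqP; rewrite -(eqn_add2l n) E subnKC.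
Qed.

Lemma sum_ge_const (K n : nat) (c : R) : (n <= K)%N ->
  \sum_(k < K | ~~ (k < n)%N) c = c *+ (K - n).
Proof.
move=> nK.
have -> : \sum_(k < K | ~~ (k < n)%N) c = \sum_(k in ~: [set k : 'I_K | (k < n)%N]) c.
  by apply: eq_bigl => k; rewrite !inE.
rewrite sumr_const; congr (_ *+ _).
exact: card_ge.
Qed.

Lemma cand_props (K K0 : nat) (a : 'I_K -> R) : (K0 < K)%N -> in_simplex a ->
  [/\ in_simplex (prox_candidate a K0),
      sqdist a (prox_candidate a K0) =
        \sum_(k < K | (k < K0)%N) a k ^+ 2 +
        (\sum_(k < K | (k < K0)%N) a k) ^+ 2 / (K - K0)%:R
    & (l0 (prox_candidate a K0) <= K - K0)%N].
Proof.
move=> K0K [a0 a1].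
set T0 := \sum_(k < K | (k < K0)%N) a k.
set mK : R := (K - K0)%:R.
have mKpos : 0 < mK by rewrite ltr0n subn_gt0.
have K0le : (K0 <= K)%N by apply: ltnW.
have T0ge : 0 <= T0 by apply: sumr_ge0.
split.
- split.
    move=> k; rewrite /prox_candidate; case: ifP => _ //.
    by apply: addr_ge0 => //; apply: divr_ge0 => //; apply: ltW.
  rewrite (bigID (fun k : 'I_K => (k < K0)%N)) /=.
  rewrite big1; last by move=> k kK; rewrite /prox_candidate kK.
  rewrite add0r.
  rewrite (eq_bigr (fun k => a k + T0 / mK)); last first.
    by move=> k /negbTE kK; rewrite /prox_candidate kK.
  rewrite big_split /= sum_ge_const // -/mK -mulr_natr mulfVK ?gt_eqF //.
  by rewrite -a1 [RHS](bigID (fun k : 'I_K => (k < K0)%N)) /= addrC.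
- rewrite /sqdist (bigID (fun k : 'I_K => (k < K0)%N)) /=.
  congr (_ + _).
    by apply: eq_bigr => k kK; rewrite /prox_candidate kK subr0.
  rewrite (eq_bigr (fun k => (T0 / mK) ^+ 2)); last first.
    by move=> k /negbTE kK; rewrite /prox_candidate kK opprD addrA subrr sub0r sqrrN.
  rewrite sum_ge_const // -mulr_natr -/mK; field; rewrite gt_eqF //.
- rewrite /l0.
  apply: leq_trans (subset_leq_card (_ : _ \subset ~: [set k : 'I_K | (k < K0)%N])) _.
    apply/subsetP => k; rewrite !inE /prox_candidate; case: ifP => //.
    by rewrite ltxx.
  by rewrite card_ge.
Qed.

Lemma part1 (K : nat) (gamma : R) (a : 'I_K -> R) :
  0 < gamma -> in_simplex a ->
  (forall i j : 'I_K, (i <= j)%N -> a i <= a j) ->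
  forall K0 : nat, (K0 < K)%N ->
     (forall n : nat, (n < K)%N -> gfun gamma a K0 <= gfun gamma a n) ->
     in_prox gamma (@h_l0_simplex R K) a (prox_candidate a K0).
Proof.
move=> gpos [a0 a1] amono K0 K0K gmin z.
have [cS cD cL] := @cand_props K K0 a K0K (conj a0 a1 : in_simplex a).
rewrite /h_l0_simplex (asboolT cS).
case: (asboolP (in_simplex z)) => [[z0 z1]|nz]; last first.
  by rewrite addey // leey.
rewrite -!EFinD lee_fin.
set S := [set k | 0 < z k].
have zS k : k \notin S -> z k = 0.
  by rewrite inE => /negbTE zk; apply/eqP; rewrite eq_le z0 andbT leNgt zk.
have Spos : (0 < #|S|)%N.
  rewrite lt0n cards_eq0; apply/negP => /eqP S0.
  move: z1; rewrite big1 => [/eqP|k _]; first by rewrite eq_sym oner_eq0.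
  by apply: zS; rewrite S0 inE.
have SK : (#|S| <= K)%N by move: (max_card S); rewrite card_ord.
set n := (K - #|S|)%N.
have nK : (n < K)%N by rewrite /n; lia.
have cSc : #|~: S| = n.
  have E := cardsC S; rewrite card_ord in E.
  by apply/eqP; rewrite -(eqn_add2l #|S|) E /n subnKC.
have Hfl := @face_lb K a z S zS (etrans z1 (esym a1)) Spos.
have r1 := @rearr K n a (~: S) (fun k => a0 k) amono cSc.
have r2 : \sum_(k < K | (k < n)%N) a k ^+ 2 <= \sum_(k in ~: S) a k ^+ 2.
  apply: rearr => //; first by move=> k; apply: sqr_ge0.
  by move=> i j ij; have := amono i j ij; have := a0 i; nra.
have gm := gmin n nK; rewrite /gfun in gm.
have Kn : (K - n)%N = #|S| by rewrite /n subKn.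
rewrite Kn in gm.
rewrite cD.
set m : R := #|S|%:R.
have mpos : 0 < m by rewrite ltr0n.
set X := \sum_(k < K | (k < n)%N) a k.
set Y := \sum_(k in ~: S) a k.
have X0 : 0 <= X by apply: sumr_ge0.
have XY : X ^+ 2 / m <= Y ^+ 2 / m.
  apply: ler_wpM2r; first by rewrite invr_ge0 ltW.
  by have r1' : X <= Y := r1; move: r1' X0; nra.
set Qn := \sum_(k < K | (k < n)%N) a k ^+ 2.
set Q0 := \sum_(k < K | (k < K0)%N) a k ^+ 2.
set T0 := \sum_(k < K | (k < K0)%N) a k.
set g := 2 * gamma.
have gp : 0 < g by rewrite /g mulr_gt0.
have HD : (Qn + X ^+ 2 / m) / g <= sqdist a z / g.
  apply: ler_wpM2r; first by rewrite invr_ge0 ltW.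
  set W := \sum_(k in ~: S) a k ^+ 2.
  have h1 : W + Y ^+ 2 / m <= sqdist a z := Hfl.
  have h2 : Qn <= W := r2.
  lra.
have E1 : (Q0 + T0 ^+ 2 / (K - K0)%:R) / g = T0 ^+ 2 / (K - K0)%:R / g + Q0 / g.
  by rewrite mulrDl addrC.
have E2 : (Qn + X ^+ 2 / m) / g = X ^+ 2 / m / g + Qn / g.
  by rewrite mulrDl addrC.
have L1 : (l0 (prox_candidate a K0))%:R <= K%:R - K0%:R :> R.
  by rewrite -natrB ?ler_nat // ltnW.
have nm : n%:R + m = K%:R :> R by rewrite -natrD /n subnK.
rewrite E1; move: HD; rewrite E2 => HD.
have gm' : T0 ^+ 2 / (K - K0)%:R / g + Q0 / g - K0%:R <= X ^+ 2 / m / g + Qn / g - n%:R := gm.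
lra.
Qed.

Lemma split2 (K : nat) (i j : 'I_K) (F : 'I_K -> R) : j != i ->
  \sum_k F k = F i + (F j + \sum_(k | (k != i) && (k != j)) F k).
Proof. by move=> ji; rewrite (bigD1 i) //= (bigD1 j). Qed.

Lemma part2 (K : nat) (gamma : R) (a : 'I_K -> R) :
  0 < gamma -> in_simplex a ->
  forall i : 'I_K, a i = 0 ->
     forall y : 'I_K -> R, in_prox gamma (@h_l0_simplex R K) a y -> y i = 0.
Proof.
move=> gpos [a0 a1] i ai y Hy.
have ya : in_simplex y.
  case: (asboolP (in_simplex y)) => // ny.
  move: (Hy a); rewrite /h_l0_simplex (asboolF ny) (asboolT (conj a0 a1 : in_simplex a)).
  by rewrite addey // leye_eq -EFinD.
case: (ya) => y0 y1.
apply/eqP; rewrite eq_le y0 andbT leNgt; apply/negP => yi.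
case: (pickP (fun j => y j < a j)) => [j yj | hn]; last first.
  have : \sum_k a k < \sum_k y k.
    rewrite (bigD1 i) //= [X in _ < X](bigD1 i) //= ai.
    apply: ltr_leD => //; apply: ler_sum => k _; rewrite leNgt hn //.
  by rewrite a1 y1 ltxx.
have ji : j != i.
  apply/eqP => ji; move: yj; rewrite ji ai => yi0.
  by move: (y0 i); rewrite leNgt yi0.
pose z := fun k => if k == i then 0 else if k == j then y j + y i else y k.
have zi : z i = 0 by rewrite /z eqxx.
have zj : z j = y j + y i by rewrite /z (negbTE ji) eqxx.
have zr : \sum_(k | (k != i) && (k != j)) z k = \sum_(k | (k != i) && (k != j)) y k.
  by apply: eq_bigr => k /andP[ki kj]; rewrite /z (negbTE ki) (negbTE kj).
have zs : in_simplex z.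
  split.
    move=> k; rewrite /z; case: ifP => // _; case: ifP => // _.
    by apply: addr_ge0.
  by rewrite (@split2 K i j _ ji) zi zj zr -y1 (@split2 K i j _ ji); lra.
have dlt : sqdist a z < sqdist a y.
  rewrite /sqdist (@split2 K i j _ ji) [X in _ < X](@split2 K i j _ ji) zi zj ai.
  have -> : \sum_(k | (k != i) && (k != j)) (a k - z k) ^+ 2 =
            \sum_(k | (k != i) && (k != j)) (a k - y k) ^+ 2.
    by apply: eq_bigr => k /andP[ki kj]; rewrite /z (negbTE ki) (negbTE kj).
  have yj' : 0 < a j - y j by rewrite subr_gt0.
  nra.
have lle : (l0 z <= l0 y)%N.
  rewrite /l0; set Sy := [set k | 0 < y k].
  apply: leq_trans (subset_leq_card (_ : _ \subset j |: (Sy :\ i))) _.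
    apply/subsetP => k; rewrite !inE /z.
    case: (k =P i) => [->|ki]; first by rewrite ltxx.
    by case: (k == j).
  rewrite cardsU1 [X in (_ <= X)%N](cardsD1 i) !inE yi.
  by rewrite leq_add2r leq_b1.
move: (Hy z); rewrite /h_l0_simplex (asboolT ya) (asboolT zs) -!EFinD lee_fin.
have gp : 0 < 2 * gamma by rewrite mulr_gt0.
have : sqdist a z / (2 * gamma) < sqdist a y / (2 * gamma).
  by rewrite ltr_pM2r // invr_gt0.
have : (l0 z)%:R <= (l0 y)%:R :> R by rewrite ler_nat.
lra.
Qed.
End Helpers.

Theorem lemma3 (R : realType) (K : nat) (gamma : R) (a : 'I_K -> R) :
  0 < gamma ->
  in_simplex a ->
  (forall i j : 'I_K, (i <= j)%N -> a i <= a j) ->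
  (* (i) *)
  (forall K0 : nat, (K0 < K)%N ->
     (forall n : nat, (n < K)%N -> gfun gamma a K0 <= gfun gamma a n) ->
     in_prox gamma (@h_l0_simplex R K) a (prox_candidate a K0))
  /\
  (* (ii) *)
  (forall i : 'I_K, a i = 0 ->
     forall y : 'I_K -> R, in_prox gamma (@h_l0_simplex R K) a y -> y i = 0).
Proof.
move=> gpos sa amono; split.
- exact: part1.
- exact: part2.
Qed.
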